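(* For every integer $n\ge0$, $b(3n)$ is odd if $n=2k(3k+1)$ for some integer $k$ (in which case $b(3n)\equiv(-1)^k\pmod 2$), and $b(3n)\equiv 0\pmod 2$ otherwise.
   Context: $f_m:=(q^m;q^m)_\infty=\prod_{j\ge1}(1-q^{mj})$. The mock theta function $\mathcal{B}(q)=\sum_{n\ge0}\frac{q^n(-q;q^2)_n}{(q;q^2)_{n+1}}=\sum_{n\ge0}b(n)q^n$, where $(a;q)_n=\prod_{j=0}^{n-1}(1-aq^j)$. *)

(* Defs.v *)
(* Formal power series in q with integer coefficients,
   represented as coefficient functions nat -> int. *)
From mathcomp Require Import all_boot all_order all_algebra.
Set Implicit Arguments. Unset Strict Implicit. Unset Printing Implicit Defensive.
Import Order.TTheory GRing.Theory Num.Theory.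
Local Open Scope ring_scope.

Definition fps := nat -> int.

Definition fps_mul (f g : fps) : fps :=
  fun n => \sum_(i < n.+1) f i * g (n - i)%N.

Definition fps_one : fps := fun n => if n == 0%N then 1 else 0.

Definition fps_qpow (m : nat) : fps := fun n => if n == m then 1 else 0.

(* 1 - a q^m  (for m >= 1) *)
Definition fps_lin (a : int) (m : nat) : fps :=
  fun n => if n == 0%N then 1 else if n == m then - a else 0.

(* 1 / (1 - q^m) = sum_i q^(m i), for m >= 1 *)
Definition fps_geom (m : nat) : fps := fun n => if (m %| n)%N then 1 else 0.

Definition fps_prod (s : seq fps) : fps := foldr fps_mul fps_one s.

(* (-q;q^2)_n = prod_{j<n} (1 + q^{2j+1}) *)
Definition negq_q2 (n : nat) : fps :=
  fps_prod [seq fps_lin (-1) (2 * j).+1 | j <- iota 0 n].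

(* 1/(q;q^2)_{n+1} = prod_{j<=n} 1/(1 - q^{2j+1}) *)
Definition inv_q_q2 (n : nat) : fps :=
  fps_prod [seq fps_geom (2 * j).+1 | j <- iota 0 n.+1].

(* n-th summand  q^n (-q;q^2)_n / (q;q^2)_{n+1} *)
Definition B_term (n : nat) : fps :=
  fps_mul (fps_qpow n) (fps_mul (negq_q2 n) (inv_q_q2 n)).

(* b(N): coefficient of q^N in B(q); summands with n > N contribute 0 to
   the coefficient of q^N because of the factor q^n. *)
Definition b (N : nat) : int := \sum_(n < N.+1) B_term n N.

(* Main.v *)
Require Import Defs.
From mathcomp Require Import all_boot all_order all_algebra.
From mathcomp Require Import zify.
Import Order.TTheory GRing.Theory Num.Theory.
Set Implicit Arguments. Unset Strict Implicit.

Section Nat.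
Local Open Scope nat_scope.
Lemma parity_inv K (P : pred 'I_K) (h : 'I_K -> 'I_K) : involutive h -> (forall i, P (h i) = P i) ->
 odd (\sum_(i | P i) 1) = odd (\sum_(i | P i && (h i == i)) 1).
Proof.
move=> hh hP.
rewrite (bigID (fun i => h i == i)) /=.
rewrite [X in (_ + X)%N](bigID (fun i => (h i < i)%N)) /=.
set A := \sum_(i | (P i && ~~ (h i == i)) && (h i < i)%N) 1.
have -> : \sum_(i | (P i && ~~(h i == i)) && ~~(h i < i)%N) 1 = A.
  rewrite /A (reindex_inj (inv_inj hh)) /=; apply: eq_bigl => i; rewrite hh hP.
  case: (P i) => //=; rewrite eq_sym.
  by case: (ltngtP i (h i)) => // /val_inj <-; rewrite eqxx.
by rewrite oddD oddD addbb addbF.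
Qed.

Lemma t3 i j : ((2*i).+1 * (2*i).+1 = (2*j).+1 * (2*j).+1)%N -> i = j.
Proof. nia. Qed.

Section Inv.
Variable N : nat.
Let M := (2 * N).+1.
Definition Pd (i : 'I_N.+1) := ((2 * i).+1 %| M)%N.
Definition hfun (i : 'I_N.+1) : 'I_N.+1 :=
  if Pd i then inord ((M %/ (2 * i).+1)./2) else i.

Lemma hP i : Pd i -> exists2 x, (x <= N)%N & ((2*x).+1 * (2*i).+1 = M)%N /\ val (hfun i) = x.
Proof.
move=> hi; set q := (M %/ (2 * i).+1)%N.
have hq : (q * (2 * i).+1 = M)%N by rewrite divnK.
have oq : odd q.
  have : odd M by rewrite /M /= oddM.
  by rewrite -hq oddM => /andP[].
have hx : (2 * q./2).+1 = q.
  by rewrite -[RHS]odd_double_half oq -muln2 mulnC.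
have xN : (q./2 <= N)%N.
  have : (q <= M)%N by apply: leq_div.
  rewrite /M -hx; lia.
exists q./2 => //; split; first by rewrite hx.
by rewrite /hfun hi /= inordK.
Qed.

Lemma hfunP i : Pd (hfun i) = Pd i.
Proof.
case hi: (Pd i); last by rewrite /hfun hi.
have [x _ [hx hv]] := hP hi.
by rewrite /Pd hv -hx dvdn_mulr.
Qed.

Lemma hfun_inv : involutive hfun.
Proof.
move=> i; case hi: (Pd i); last by rewrite /hfun hi hi.
have [x _ [hx hv]] := hP hi.
have hi' : Pd (hfun i) by rewrite hfunP.
have [y _ [hy hw]] := hP hi'.
apply: val_inj; rewrite hw; move: hy; rewrite hv -hx mulnC => /eqP; rewrite eqn_pmul2l // => /eqP /succn_inj /eqP; by rewrite eqn_mul2l /= => /eqP.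
Qed.

Lemma hfun_fix i : Pd i && (hfun i == i) = ((2 * i).+1 * (2 * i).+1 == M)%N.
Proof.
case hi: (Pd i) => /=.
  have [x _ [hx hv]] := hP hi.
  rewrite -hx; apply/eqP/eqP => [/(congr1 val) h|h]; first by rewrite -h hv.
  apply: val_inj; rewrite hv; move: h => /eqP; rewrite eqn_pmul2r // => /eqP /succn_inj /eqP.
  by rewrite eqn_mul2l /= => /eqP.
apply/esym/negbTE; apply/negP => /eqP h; move: hi; rewrite /Pd -h dvdn_mulr //.
Qed.
End Inv.

End Nat.

Local Open Scope ring_scope.


Section Trunc.
Variable N : nat.

Definition agr (p : {poly 'F_2}) (f : fps) := forall k, (k <= N)%N -> p`_k = (f k)%:~R.
Definition eqN (p q : {poly 'F_2}) := forall k, (k <= N)%N -> p`_k = q`_k.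

Lemma agr_mul p q f g : agr p f -> agr q g -> agr (p * q) (fps_mul f g).
Proof.
move=> hp hq k hk; rewrite coefM /fps_mul.
rewrite (big_morph _ (@intrD _) (mulr0z 1)).
apply: eq_bigr => i _; rewrite intrM hp ?hq //.
  by apply: leq_trans (leq_subr _ _) hk.
by apply: leq_trans hk; rewrite -ltnS.
Qed.

Lemma eqN_mul p p' q q' : eqN p p' -> eqN q q' -> eqN (p * q) (p' * q').
Proof.
move=> hp hq k hk; rewrite !coefM; apply: eq_bigr => i _; rewrite hp ?hq //.
  by apply: leq_trans (leq_subr _ _) hk.
by apply: leq_trans hk; rewrite -ltnS.
Qed.

Lemma agr_eqN p q f : eqN p q -> agr q f -> agr p f.
Proof. by move=> h1 h2 k hk; rewrite h1 // h2. Qed.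

Lemma agr_one : agr 1 fps_one.
Proof. by move=> k _; rewrite coef1 /fps_one; case: (k == 0%N). Qed.

Lemma agr_qpow m : agr 'X^m (fps_qpow m).
Proof. by move=> k _; rewrite coefXn /fps_qpow; case: (k == m). Qed.

Lemma agr_lin m : (0 < m)%N -> agr (1 + 'X^m) (fps_lin (-1) m).
Proof.
move=> m0 k _; rewrite coefD coef1 coefXn /fps_lin.
case: k => [|k] /=.
  by rewrite eq_sym (negbTE (lt0n_neq0 m0)) addr0.
by case: (k.+1 == m); rewrite add0r.
Qed.

Definition G m := \poly_(i < N.+1) (if (m %| i)%N then (1 : 'F_2) else 0).

Lemma agr_geom m : agr (G m) (fps_geom m).
Proof. by move=> k hk; rewrite coef_poly ltnS hk /fps_geom; case: (m %| k)%N. Qed.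

Lemma eqN_linG m : (0 < m)%N -> eqN ((1 + 'X^m) * G m) 1.
Proof.
move=> m0 k hk; rewrite mulrDl mul1r coefD coefXnM coef1 !coef_poly.
have hk' : (k < N.+1)%N by [].
rewrite hk'; case: ltnP => km.
  rewrite addr0; case: eqP => [->|k0]; first by rewrite dvdn0.
  case: ifP => // /dvdn_leq; rewrite lt0n; move/eqP: k0 => -> /(_ isT).
  by rewrite leqNgt km.
have e : (m %| k)%N = (m %| k - m)%N by rewrite -{1}(subnK km) dvdn_addl.
rewrite (leq_ltn_trans (leq_subr _ _) hk') -e.
have -> : (k == 0%N) = false by apply/negbTE; rewrite -lt0n; apply: leq_trans km.
by case: (m %| k)%N; rewrite ?addr0 //; apply: val_inj.
Qed.

Lemma eqN_refl p : eqN p p. Proof. by []. Qed.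
Lemma eqN_sym p q : eqN p q -> eqN q p. Proof. by move=> h k hk; rewrite h. Qed.
Lemma eqN_trans p q r : eqN p q -> eqN q r -> eqN p r.
Proof. by move=> h1 h2 k hk; rewrite h1 ?h2. Qed.

Lemma agr_prod (s : seq nat) (P : nat -> {poly 'F_2}) (Fs : nat -> fps) :
  (forall x, agr (P x) (Fs x)) ->
  agr (\prod_(x <- s) P x) (fps_prod [seq Fs x | x <- s]).
Proof.
move=> h; elim: s => [|x s IH]; first by rewrite big_nil; exact: agr_one.
by rewrite big_cons /=; apply: agr_mul.
Qed.

Lemma eqN_prod (s : seq nat) (P Q : nat -> {poly 'F_2}) :
  (forall x, eqN (P x) (Q x)) -> eqN (\prod_(x <- s) P x) (\prod_(x <- s) Q x).
Proof.
move=> h; elim: s => [|x s IH]; first by rewrite !big_nil.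
by rewrite !big_cons; apply: eqN_mul.
Qed.

Lemma agr_B n : agr ('X^n * G (2 * n).+1) (B_term n).
Proof.
set Q := ('X^n * ((\prod_(j <- iota 0 n) (1 + 'X^((2 * j).+1))) *
   (\prod_(j <- iota 0 n.+1) G (2 * j).+1))).
have hQ : agr Q (B_term n).
  apply: agr_mul; first exact: agr_qpow.
  apply: agr_mul; first by apply: agr_prod => x; apply: agr_lin.
  by apply: agr_prod => x; apply: agr_geom.
have e : eqN ('X^n * G (2 * n).+1) Q.
  apply: eqN_mul => //.
  have -> : iota 0 n.+1 = iota 0 n ++ [:: n] by rewrite -addn1 iotaD.
  rewrite big_cat /= big_cons big_nil mulr1 mulrA -big_split /=.
  rewrite -{1}[G _]mul1r; apply: eqN_mul => //.
  have e1 : (1 : {poly 'F_2}) = \prod_(j <- iota 0 n) 1 by rewrite big1.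
  rewrite {1}e1.
  by apply: eqN_prod => x; exact: (eqN_sym (eqN_linG (ltn0Sn _))).
move=> k hk; rewrite e // hQ //.
Qed.

End Trunc.
Lemma pm (z k : int) : odd `|z|%N -> (z == (-1) ^ k %[mod 2])%Z.
Proof.
move=> oz; rewrite eqz_mod_dvd.
have : (-1 : int) ^ k = 1 \/ (-1 : int) ^ k = -1.
  case: k => m; rewrite ?NegzE -?exprnN ?invr_sign -?exprnP -signr_odd; case: (odd _); by [left|right].
case=> ->; rewrite dvdzE /=; move: oz; rewrite -[odd _]negbK -dvdn2; lia.
Qed.
Lemma key n : (exists i : nat, ((2*i).+1 * (2*i).+1 = (2*(3*n)).+1)%N) <-> exists k : int, n%:Z = 2*k*(3*k+1).
Proof.
split.
  case=> i hi; have := divn_eq i 3; have : (i %% 3 < 3)%N by rewrite ltn_mod.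
  set r := (i %% 3)%N; set q := (i %/ 3)%N.
  case: r => [|[|[|r]]] // _ ei.
  - exists q%:Z; rewrite ei in hi; nia.
  - rewrite ei in hi; nia.
  - exists (- (q.+1)%:Z); rewrite ei in hi; nia.
case=> -[m|m] h.
  exists (3 * m)%N; nia.
exists (3 * m).+2; rewrite NegzE in h; nia.
Qed.


Lemma t (m : nat) : (m%:R : 'F_2) = (odd m)%:R.
Proof. apply: val_inj; rewrite /= !val_Zp_nat // modn2. by case: (odd m). Qed.
Lemma t2 (z : int) : (z%:~R : 'F_2) = (odd `|z|%N)%:R.
Proof. rewrite -t; case: z => [m|m]; rewrite ?NegzE ?mulrNz pmulrn //=.
have h : forall x : 'F_2, - x = x by move=> x; case: x => [[|[|i]] hi] //; apply: val_inj.
exact: h.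
Qed.

Lemma dvd_equiv N (i : 'I_N.+1) : ((2 * i).+1 %| N - i)%N = Pd i.
Proof.
rewrite /Pd; have hi : (i <= N)%N by rewrite -ltnS.
have -> : (2 * N).+1 = (2 * (N - i) + (2 * i).+1)%N by lia.
by rewrite dvdn_addl // Gauss_dvdr // coprimen2 /= oddM.
Qed.

Lemma b_F2 N : ((b N)%:~R : 'F_2) = (\sum_(i < N.+1 | Pd i) 1)%N%:R.
Proof.
rewrite /b (big_morph _ (@intrD _) (mulr0z 1)) natr_sum [RHS]big_mkcond /=.
apply: eq_bigr => i _.
rewrite -(agr_B (N:=N) i (leqnn N)) coefXnM ltnNge (ltnSE (ltn_ord i)) /=.
by rewrite coef_poly ltnS leq_subr dvd_equiv; case: (Pd i).
Qed.

Lemma odd_b N : odd `|b N|%N = [exists i : 'I_N.+1, (2 * i).+1 * (2 * i).+1 == (2 * N).+1]%N.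
Proof.
have e := b_F2 N; rewrite t2 [RHS]t in e.
have -> : odd `|b N|%N = odd (\sum_(i < N.+1 | Pd i) 1)%N.
  move: e; case: (odd `|b N|%N); case: (odd (\sum_(i < N.+1 | Pd i) 1)%N) => // /(congr1 val).
rewrite (parity_inv (@hfun_inv N) (@hfunP N)).
rewrite (eq_bigl _ _ (@hfun_fix N)).
case hE: [exists i : 'I_N.+1, (2 * i).+1 * (2 * i).+1 == (2 * N).+1]%N.
  case/existsP: hE => i0 hi0.
  rewrite (eq_bigl (pred1 i0)) ?big_pred1_eq // => i /=.
  apply/eqP/eqP => [h|->]; last exact/eqP.
  by apply: val_inj; apply: t3; move/eqP: hi0 => ->.
rewrite big_pred0 // => i; apply: negbTE; apply: contraFN hE => hi; by apply/existsP; exists i.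
Qed.

Theorem mainTheorem2 (n : nat) :
  ((exists k : int, n%:Z = 2 * k * (3 * k + 1)) ->
     odd `|b (3 * n)|%N /\
     (forall k : int, n%:Z = 2 * k * (3 * k + 1) ->
        (b (3 * n) == (-1) ^ k %[mod 2])%Z)) /\
  (~ (exists k : int, n%:Z = 2 * k * (3 * k + 1)) ->
     (b (3 * n) == 0 %[mod 2])%Z).
Proof.
have E : odd `|b (3 * n)|%N <-> exists k : int, n%:Z = 2 * k * (3 * k + 1).
  rewrite odd_b -key; split.
    by case/existsP => i /eqP h; exists (val i).
  case=> i h; apply/existsP.
  have hi : (i < (3 * n).+1)%N by nia.
  by exists (Ordinal hi); apply/eqP.
split.
  move=> /E ho; split => // k _; exact: pm.
move=> hn; rewrite eqz_mod_dvd subr0 dvdzE /= dvdn2.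
by apply/negP => /E.
Qed.
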